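(* A vertex of a monotonous quiver is phylogenetic if and only if it is normal and has finite height.
   Context: A quiver consists of a class of vertices and, for each ordered pair of vertices $(A,B)$, a set of edges $A\to B$ (loops and multiple edges allowed). An evolution of length $m\ge 0$ is a sequence $A_0\leftarrow A_1\leftarrow\cdots\leftarrow A_m$ of vertices together with edges $A_k\to A_{k-1}$ ($1\le k\le m$); $A_0$ is its initial and $A_m$ its terminal vertex. Write $A\le B$ ($A$ is an ancestor of $B$) if there is an evolution with initial vertex $A$ and terminal vertex $B$; $A,B$ are isotypic ($A\sim B$) if $A\le B$ and $B\le A$. A vertex $A$ is primitive if every ancestor of $A$ is isotypic to $A$. A full evolution for $X$ is an evolution with primitive initial vertex and terminal vertex $X$. The height $h(X)$ is the smallest length of a full evolution for $X$ ($\infty$ if none). A vertex $A_k$ ($0\le k<m$) of an evolution $A_0\leftarrow\cdots\leftarrow A_m$ is critical if $h(A_k)<\infty$ and $h(A_{k+1})=h(A_k)+1$. The critical ancestors of a vertex $B$ are the critical vertices of full evolutions terminating at $B$. $B$ is normal if any two critical ancestors of $B$ of equal height are isotypic. An evolution $\alpha=(A_0\leftarrow\cdots\leftarrow A_m)$ embeds in $\beta=(B_0\leftarrow\cdots\leftarrow B_n)$ if $m\le n$ and there are $0\le r_0<\cdots<r_m\le n$ with $A_k\sim B_{r_k}$. A universal evolution for $X$ is a full evolution for $X$ embedding in every full evolution for $X$; $X$ is phylogenetic if one exists. A quiver is monotonous if $h(A)\ge h(B)$ for every edge $A\to B$. *)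

(* Defs.v *)
(* A quiver: a type V of vertices and, for each ordered pair
   (A,B), a type E A B of edges A -> B (loops / multiple edges allowed). *)
From Stdlib Require Import Arith.

Section Quiver.
Context {V : Type} (E : V -> V -> Type).

(* An evolution of length m is given by its vertex sequence A_0,...,A_m
   (a function A : nat -> V, only values at 0..m matter) together with
   edges A_k -> A_{k-1} for 1 <= k <= m. *)
Definition is_evol (m : nat) (A : nat -> V) : Prop :=
  forall k, 1 <= k <= m -> inhabited (E (A k) (A (k - 1))).

Definition ancestor (A B : V) : Prop :=
  exists m Af, is_evol m Af /\ Af 0 = A /\ Af m = B.

Definition isotypic (A B : V) : Prop := ancestor A B /\ ancestor B A.

Definition primitive (A : V) : Prop := forall B, ancestor B A -> isotypic B A.

Definition full_evol (m : nat) (Af : nat -> V) (X : V) : Prop :=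
  is_evol m Af /\ primitive (Af 0) /\ Af m = X.

Definition has_height (X : V) (n : nat) : Prop :=
  (exists Af, full_evol n Af X) /\
  (forall m Af, full_evol m Af X -> n <= m).

Definition finite_height (X : V) : Prop := exists n, has_height X n.

Definition critical (m : nat) (Af : nat -> V) (k : nat) : Prop :=
  k < m /\ exists n, has_height (Af k) n /\ has_height (Af (S k)) (S n).

Definition critical_ancestor (C B : V) : Prop :=
  exists m Af k, full_evol m Af B /\ critical m Af k /\ Af k = C.

Definition normal (B : V) : Prop :=
  forall C D n, critical_ancestor C B -> critical_ancestor D B ->
    has_height C n -> has_height D n -> isotypic C D.

Definition embeds (m : nat) (Af : nat -> V) (n : nat) (Bf : nat -> V) : Prop :=
  m <= n /\ exists r : nat -> nat,
    (forall k, k < m -> r k < r (S k)) /\ r m <= n /\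
    (forall k, k <= m -> isotypic (Af k) (Bf (r k))).

Definition universal_evol (m : nat) (Af : nat -> V) (X : V) : Prop :=
  full_evol m Af X /\ forall n Bf, full_evol n Bf X -> embeds m Af n Bf.

Definition phylogenetic (X : V) : Prop := exists m Af, universal_evol m Af X.

(* monotonous: h(A) >= h(B) for every edge A -> B (with h = infinity allowed) *)
Definition monotonous : Prop :=
  forall A B (e : E A B) nA, has_height A nA ->
    exists nB, has_height B nB /\ nB <= nA.

End Quiver.

(* Main.v *)
Require Import Defs.
From Stdlib Require Import Arith Lia Classical ClassicalEpsilon.


Lemma concat_evol {V : Type} (E : V -> V -> Type) a b (d e : nat -> V) :
  is_evol E a d -> is_evol E b e -> d a = e 0 ->
  is_evol E (a+b) (fun i => if i <=? a then d i else e (i - a)).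
Proof.
  intros Hd He Hde k Hk.
  destruct (k <=? a) eqn:H1; [apply Nat.leb_le in H1 | apply Nat.leb_gt in H1].
  - assert (H2 : k - 1 <=? a = true) by (apply Nat.leb_le; lia).
    rewrite H2. apply Hd; lia.
  - destruct (k - 1 <=? a) eqn:H2; [apply Nat.leb_le in H2 | apply Nat.leb_gt in H2].
    + assert (Hk1 : k - 1 = a) by lia. rewrite Hk1, Hde.
      assert (Hka : k - a = 1) by lia. rewrite Hka.
      exact (He 1 ltac:(lia)).
    + replace (k - 1 - a) with (k - a - 1) by lia. apply He; lia.
Qed.

Lemma mono_back {V : Type} (E : V -> V -> Type) (mono : monotonous E) m A :
  is_evol E m A -> forall b nb, b <= m -> has_height E (A b) nb ->
  forall k, k <= b -> exists na, has_height E (A k) na /\ na <= nb.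
Proof.
  intros HA b. induction b; intros nb Hb Hh k Hk.
  - replace k with 0 by lia. exists nb; auto.
  - destruct (Nat.eq_dec k (S b)) as [->|Hne]. exists nb; auto.
    destruct (HA (S b) ltac:(lia)) as [e].
    replace (S b - 1) with b in e by lia.
    destruct (mono _ _ e nb Hh) as [n' [Hn' Hle]].
    destruct (IHb n' ltac:(lia) Hn' k ltac:(lia)) as [na [? ?]].
    exists na; split; [auto | lia].
Qed.

Lemma hh_unique {V : Type} (E : V -> V -> Type) X a b :
  has_height E X a -> has_height E X b -> a = b.
Proof.
  intros [[Af HA] Ha] [[Bf HB] Hb].
  specialize (Ha _ _ HB). specialize (Hb _ _ HA). lia.
Qed.

Lemma prefix_full {V : Type} (E : V -> V -> Type) n A X i :
  full_evol E n A X -> i <= n -> full_evol E i A (A i).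
Proof.
  intros [He [Hp _]] Hi. split; [|split; auto].
  intros k Hk; apply He; lia.
Qed.

Lemma step_up {V : Type} (E : V -> V -> Type) m A k a b :
  is_evol E m A -> k < m -> has_height E (A k) a ->
  has_height E (A (S k)) b -> b <= S a.
Proof.
  intros HA Hk [[d [Hd [Hp Hde]]] _] [_ Hb].
  assert (He : is_evol E 1 (fun i => A (k + i))).
  { intros i Hi. replace i with 1 by lia. simpl.
    replace (k + 1) with (S k) by lia. replace (k + 0) with k by lia.
    destruct (HA (S k) ltac:(lia)) as [e]. replace (S k - 1) with k in e by lia.
    exact (inhabits e). }
  pose proof (concat_evol E a 1 d _ Hd He ltac:(cbn; rewrite Nat.add_0_r; auto)) as Hc.
  apply Nat.le_trans with (a + 1); [|lia].
  eapply Hb. split; [exact Hc|split].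
  - simpl. exact Hp.
  - simpl. assert (H1 : a + 1 <=? a = false) by (apply Nat.leb_gt; lia).
    rewrite H1. f_equal. lia.
Qed.

Lemma chain_up {V : Type} (E : V -> V -> Type) (mono : monotonous E) m A :
  is_evol E m A -> forall b nb, b <= m -> has_height E (A b) nb ->
  forall k a, k <= b -> has_height E (A k) a -> nb <= a + (b - k).
Proof.
  intros HA b. induction b; intros nb Hb Hh k a Hk Ha.
  - replace k with 0 in Ha by lia. rewrite (hh_unique E _ _ _ Hh Ha). lia.
  - destruct (Nat.eq_dec k (S b)) as [->|Hne].
    + rewrite (hh_unique E _ _ _ Hh Ha). lia.
    + destruct (mono_back E mono m A HA (S b) nb Hb Hh b ltac:(lia)) as [n' [Hn' _]].
      pose proof (IHb n' ltac:(lia) Hn' k a ltac:(lia) Ha).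
      pose proof (step_up E m A b n' nb HA ltac:(lia) Hn' Hh). lia.
Qed.

Lemma primitive_h0 {V : Type} (E : V -> V -> Type) A :
  primitive E A -> has_height E A 0.
Proof.
  intros Hp. split.
  - exists (fun _ => A). split; [intros k Hk; lia | split; auto].
  - intros; lia.
Qed.

Lemma IVT {V : Type} (E : V -> V -> Type) (mono : monotonous E) mU U X j :
  full_evol E mU U X -> forall b nb, b <= mU -> has_height E (U b) nb -> j <= nb ->
  exists k, k <= b /\ has_height E (U k) j.
Proof.
  intros [HU [Hp _]] b. induction b; intros nb Hb Hh Hj.
  - pose proof (hh_unique E _ _ _ Hh (primitive_h0 E _ Hp)).
    exists 0. split; [lia|]. replace j with 0 by lia. apply primitive_h0; auto.
  - destruct (Nat.eq_dec j nb) as [->|Hne]. exists (S b); auto.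
    destruct (mono_back E mono mU U HU (S b) nb Hb Hh b ltac:(lia)) as [n' [Hn' _]].
    pose proof (step_up E mU U b n' nb HU ltac:(lia) Hn' Hh).
    destruct (IHb n' ltac:(lia) Hn' ltac:(lia)) as [k [? ?]].
    exists k; split; auto.
Qed.

Lemma crossing {V : Type} (E : V -> V -> Type) (mono : monotonous E) m B X j :
  full_evol E m B X -> forall b nb, b <= m -> has_height E (B b) nb -> j < nb ->
  exists t, t < b /\ has_height E (B t) j /\ has_height E (B (S t)) (S j).
Proof.
  intros [HB [Hp _]] b. induction b; intros nb Hb Hh Hj.
  - pose proof (hh_unique E _ _ _ Hh (primitive_h0 E _ Hp)). lia.
  - destruct (mono_back E mono m B HB (S b) nb Hb Hh b ltac:(lia)) as [n' [Hn' Hle]].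
    pose proof (step_up E m B b n' nb HB ltac:(lia) Hn' Hh).
    destruct (lt_dec j n') as [Hl|Hl].
    + destruct (IHb n' ltac:(lia) Hn' Hl) as [t [? ?]]. exists t; split; auto; lia.
    + exists b. split; [lia|]. replace j with n' by lia.
      replace (S n') with nb by lia. auto.
Qed.

Lemma least_exists (P : nat -> Prop) n : P n -> exists m, P m /\ forall k, P k -> m <= k.
Proof.
  intros Hn. destruct (classic (exists m, P m /\ forall k, P k -> m <= k)) as [H|H]; auto.
  exfalso.
  assert (Hall : forall m k, k < m -> ~ P k).
  { induction m; intros k Hk HPk; [lia|].
    destruct (Nat.eq_dec k m) as [->|Hne].
    - apply H. exists m. split; auto. intros k' Hk'.
      destruct (le_lt_dec m k'); auto. exfalso; apply (IHm k'); auto.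
    - apply (IHm k); auto; lia. }
  apply (Hall (S n) n); auto.
Qed.

Lemma finite_of_full {V : Type} (E : V -> V -> Type) m A X :
  full_evol E m A X -> finite_height E X.
Proof.
  intros H. destruct (least_exists (fun m => exists Af, full_evol E m Af X) m) as [n [Hn Hl]].
  - eauto.
  - exists n. split; auto. intros m' Af H'. apply Hl. eauto.
Qed.

Lemma anc_refl {V : Type} (E : V -> V -> Type) A : ancestor E A A.
Proof. exists 0, (fun _ => A). split; [intros k Hk; lia| auto]. Qed.

Lemma anc_trans {V : Type} (E : V -> V -> Type) A B C :
  ancestor E A B -> ancestor E B C -> ancestor E A C.
Proof.
  intros [a [d [Hd [H0 Ha]]]] [b [e [He [H0' Hb]]]].
  exists (a + b), (fun i => if i <=? a then d i else e (i - a)).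
  split; [apply concat_evol; auto; congruence|split].
  - simpl. auto.
  - destruct (a + b <=? a) eqn:Hl.
    + apply Nat.leb_le in Hl. replace b with 0 in * by lia. rewrite Nat.add_0_r. congruence.
    + replace (a + b - a) with b by lia. auto.
Qed.

Lemma iso_trans {V : Type} (E : V -> V -> Type) A B C :
  isotypic E A B -> isotypic E B C -> isotypic E A C.
Proof. intros [? ?] [? ?]; split; eapply anc_trans; eauto. Qed.

Lemma iso_sym {V : Type} (E : V -> V -> Type) A B :
  isotypic E A B -> isotypic E B A.
Proof. intros [? ?]; split; auto. Qed.

Lemma anc_height {V : Type} (E : V -> V -> Type) (mono : monotonous E) A B nb :
  ancestor E A B -> has_height E B nb -> exists na, has_height E A na /\ na <= nb.
Proof.
  intros [m [Af [HA [H0 Hm]]]] Hh. subst.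
  destruct (mono_back E mono m Af HA m nb (le_n _) Hh 0 ltac:(lia)) as [na [? ?]].
  eauto.
Qed.

Lemma L_univ {V : Type} (E : V -> V -> Type) (mono : monotonous E) mU U X
  (HU : universal_evol E mU U X) m B t j (HB : full_evol E m B X) (Ht : t < m)
  (H1 : has_height E (B t) j) (H2 : has_height E (B (S t)) (S j))
  k (Hk : k <= mU) (Hkj : has_height E (U k) j) : isotypic E (U k) (B t).
Proof.
  destruct (finite_of_full E _ _ _ (proj1 HU)) as [nX HX].
  pose proof H1 as H1'. destruct H1' as [[d [Hd [Hp Hdt]]] Hmin].
  destruct HB as [HBe [HBp HBm]].
  assert (He : is_evol E (m - t) (fun i => B (t + i))).
  { intros i Hi. replace (t + (i - 1)) with (t + i - 1) by lia. apply HBe; lia. }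
  pose proof (concat_evol E j (m - t) d _ Hd He ltac:(cbn; rewrite Nat.add_0_r; auto)) as Hc.
  set (g := fun i => if i <=? j then d i else B (t + (i - j))) in Hc.
  assert (Hg : full_evol E (j + (m - t)) g X).
  { split; [exact Hc|split].
    - exact Hp.
    - unfold g. destruct (j + (m - t) <=? j) eqn:Hl.
      + apply Nat.leb_le in Hl; lia.
      + replace (t + (j + (m - t) - j)) with m by lia. auto. }
  destruct (proj2 HU _ _ Hg) as [_ [r [Hr1 [Hr2 Hr3]]]].
  specialize (Hr3 k Hk).
  unfold g in Hr3.
  destruct (r k <=? j) eqn:Hl; [apply Nat.leb_le in Hl | apply Nat.leb_gt in Hl].
  - destruct (Nat.eq_dec (r k) j) as [Heq|Hne].
    + rewrite Heq, Hdt in Hr3. exact Hr3.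
    + exfalso.
      destruct (mono_back E mono j d Hd j j (le_n _) ltac:(rewrite Hdt; auto) (r k) Hl)
        as [h [Hh _]].
      assert (h <= r k) by (apply (proj2 Hh) with d; apply (prefix_full E j d (d j)); [split; auto | lia]).
      destruct (anc_height E mono _ _ _ (proj1 Hr3) Hh) as [na [Hna Hle]].
      pose proof (hh_unique E _ _ _ Hna Hkj). lia.
  - exfalso.
    assert (Hr2' : r k <= j + (m - t)).
    { apply Nat.le_trans with (r mU); auto.
      clear -Hr1 Hk. revert Hk Hr1. induction mU; intros Hk Hr1.
      { replace k with 0 by lia; auto. }
      destruct (Nat.eq_dec k (S mU)) as [->|]; auto.
      apply Nat.le_trans with (r mU).
      - apply IHmU; [lia | intros; apply Hr1; lia].
      - specialize (Hr1 mU ltac:(lia)); lia. }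
    set (t' := t + (r k - j)).
    destruct (mono_back E mono m B HBe m nX (le_n _) ltac:(rewrite HBm; auto) t' ltac:(unfold t'; lia))
      as [h' [Hh' _]].
    destruct (mono_back E mono m B HBe t' h' ltac:(unfold t'; lia) Hh' (S t) ltac:(unfold t'; lia))
      as [h2 [Hh2 Hle2]].
    pose proof (hh_unique E _ _ _ Hh2 H2).
    destruct (anc_height E mono _ _ _ (proj2 Hr3) Hkj) as [na [Hna Hle]].
    pose proof (hh_unique E _ _ _ Hna Hh'). lia.
Qed.

Theorem theorem6p1 (V : Type) (E : V -> V -> Type) (X : V) :
  monotonous E ->
  (phylogenetic E X <-> normal E X /\ finite_height E X).
Proof.
  intros mono. split.
  - intros [mU [U HU]].
    destruct (finite_of_full E _ _ _ (proj1 HU)) as [nX HX].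
    split; [|exists nX; auto].
    intros C D n HC HD HhC HhD.
    destruct HC as [ma [a [ka [Ha [[Hka [j [Hj1 Hj2]]] Heq]]]]]. subst C.
    destruct HD as [mb [b [kb [Hb [[Hkb [j' [Hj1' Hj2']]] Heq']]]]]. subst D.
    pose proof (hh_unique E _ _ _ Hj1 HhC). pose proof (hh_unique E _ _ _ Hj1' HhD). subst.
    destruct (mono_back E mono ma a (proj1 Ha) ma nX (le_n _)
                ltac:(rewrite (proj2 (proj2 Ha)); auto) (S ka) ltac:(lia)) as [s [Hs Hsle]].
    pose proof (hh_unique E _ _ _ Hs Hj2). subst s.
    destruct (IVT E mono mU U X n (proj1 HU) mU nX (le_n _)
                ltac:(rewrite (proj2 (proj2 (proj1 HU))); auto) ltac:(lia)) as [k [Hk Hkn]].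
    pose proof (L_univ E mono mU U X HU ma a ka n Ha Hka Hj1 Hj2 k Hk Hkn).
    pose proof (L_univ E mono mU U X HU mb b kb n Hb Hkb Hj1' Hj2' k Hk Hkn).
    eapply iso_trans; [apply iso_sym; eauto | eauto].
  - intros [Hn [n Hh]].
    pose proof Hh as Hh'. destruct Hh' as [[U HU] Hmin].
    assert (HUi : forall i, i <= n -> has_height E (U i) i).
    { intros i Hi.
      destruct (mono_back E mono n U (proj1 HU) n n (le_n _)
                  ltac:(rewrite (proj2 (proj2 HU)); auto) i Hi) as [h [Hh1 _]].
      assert (h <= i) by (apply (proj2 Hh1) with U; apply (prefix_full E n U X); auto).
      pose proof (chain_up E mono n U (proj1 HU) n n (le_n _)
                  ltac:(rewrite (proj2 (proj2 HU)); auto) i h Hi Hh1).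
      assert (h = i) by lia. subst h. auto. }
    exists n, U. split; auto.
    intros m B HB.
    assert (Hnm : n <= m) by (apply Hmin with B; auto).
    assert (Hr : forall k, exists t, (k < n -> t < m /\ has_height E (B t) k /\
                  has_height E (B (S t)) (S k)) /\ (n <= k -> t = m)).
    { intros k. destruct (lt_dec k n) as [Hl|Hl].
      - destruct (crossing E mono m B X k HB m n (le_n _)
                   ltac:(rewrite (proj2 (proj2 HB)); auto) Hl) as [t [? ?]].
        exists t. split; [intros; split; auto | intros; lia].
      - exists m. split; [intros; lia | auto]. }
    set (r := fun k => proj1_sig (constructive_indefinite_description _ (Hr k))).
    assert (Hrs : forall k, (k < n -> r k < m /\ has_height E (B (r k)) k /\
                  has_height E (B (S (r k))) (S k)) /\ (n <= k -> r k = m)).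
    { intros k. exact (proj2_sig (constructive_indefinite_description _ (Hr k))). }
    split; [auto|]. exists r. split; [|split].
    + intros k Hk. destruct (proj1 (Hrs k) Hk) as [Ht [H1 H2]].
      destruct (lt_dec (S k) n) as [Hl|Hl].
      * destruct (proj1 (Hrs (S k)) Hl) as [Ht' [H1' H2']].
        destruct (le_lt_dec (r (S k)) (r k)) as [Hle|]; auto. exfalso.
        destruct (mono_back E mono m B (proj1 HB) (r k) k ltac:(lia) H1 (r (S k)) Hle)
          as [h [Hh1 Hh2]].
        pose proof (hh_unique E _ _ _ Hh1 H1'). lia.
      * rewrite (proj2 (Hrs (S k)) ltac:(lia)). auto.
    + rewrite (proj2 (Hrs n) (le_n _)). auto.
    + intros k Hk. destruct (lt_dec k n) as [Hl|Hl].
      * destruct (proj1 (Hrs k) Hl) as [Ht [H1 H2]].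
        apply (Hn (U k) (B (r k)) k).
        -- exists n, U, k. split; auto. split; auto. split; auto.
           exists k. split; apply HUi; lia.
        -- exists m, B, (r k). split; auto. split; auto. split; auto. exists k; auto.
        -- apply HUi; lia.
        -- auto.
      * replace k with n by lia. rewrite (proj2 (Hrs n) (le_n _)).
        rewrite (proj2 (proj2 HU)), (proj2 (proj2 HB)). split; apply anc_refl.
Qed.
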